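(* Let $P$ be an $\omega$-polygraph and $g$ a generator of $P$, so that $(P,g)\in\mathrm{Elt}(\mathrm{Pol}_\omega)$, and let $U(P,g)=(P,g)\in\mathrm{Elt}(\mathrm{Pol}_\omega^* )$, where $g$ is regarded as a cell of $P^*$. Then (1) $(P,g)$ is principal if and only if $U(P,g)$ is principal; (2) $(P,g)$ is a plex if and only if $U(P,g)$ is a polyplex.
   Context: An $\omega$-precategory is an $\omega$-globular set with identities and compositions satisfying the axioms of strict $\omega$-categories except the interchange law. An $\omega$-polygraph $P$ consists of sets $P_k$ of $k$-generators with globular sources/targets in the free precategory on lower generators; $P^*$ is its free $\omega$-precategory, and generators are identified with cells of $P^*$ (the embedding is injective); $\mathrm{Pol}_\omega$ is the category of $\omega$-polygraphs and generator-wise morphisms $F$, inducing prefunctors $F^*$. For a functor $|-|\colon\mathcal C\to\mathrm{Set}$, $\mathrm{Elt}(\mathcal C)$ has objects $(X,x)$, $x\in|X|$, and morphisms $f\colon(X,x)\to(Y,y)$ with $|f|(x)=y$. $\mathrm{Elt}(\mathrm{Pol}_\omega)$ uses $|P|=\bigsqcup_kP_k$ (generators); $\mathrm{Elt}(\mathrm{Pol}_\omega^* )$ uses $|P|=\bigsqcup_k(P^* )_k$ (cells); $U\colon\mathrm{Elt}(\mathrm{Pol}_\omega)\to\mathrm{Elt}(\mathrm{Pol}_\omega^* )$ is the canonical embedding. An element is principal if every morphism into it whose underlying morphism is a monomorphism in $\mathrm{Pol}_\omega$ is an isomorphism; primitive if principal and every morphism into it from a principal element is an isomorphism. A plex is a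 primitive element of $\mathrm{Elt}(\mathrm{Pol}_\omega)$; a polyplex is a primitive element of $\mathrm{Elt}(\mathrm{Pol}_\omega^* )$. *)

(* Defs.v *)
(* omega-polygraphs, their free omega-precategories (as well-typed raw terms
   modulo the congruence generated by the precategory axioms), morphisms,
   categories of elements, principal / primitive elements, plexes and polyplexes. *)

Set Implicit Arguments.

Inductive term (G : nat -> Type) : Type :=
| tgen (k : nat) (g : G k)
| tid (t : term G)                  (* identity on t (dimension + 1) *)
| tcomp (i : nat) (u v : term G).

Arguments tgen {G} k g.
Arguments tid {G} t.
Arguments tcomp {G} i u v.

(* generating data: generators in each dimension, with source and target of
   (k+1)-generators given as raw terms (required below to be k-cells). *)
Record pgdata : Type := {
  gen : nat -> Type;
  gsrc : forall k, gen (S k) -> term gen;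
  gtgt : forall k, gen (S k) -> term gen }.

Section Free.
Variable D : pgdata.
Notation tm := (term (gen D)).

Definition gen_src (k : nat) : gen D k -> tm :=
  match k return gen D k -> tm with
  | 0 => fun g => tgen 0 g
  | S k' => fun g => gsrc D k' g
  end.
Definition gen_tgt (k : nat) : gen D k -> tm :=
  match k return gen D k -> tm with
  | 0 => fun g => tgen 0 g
  | S k' => fun g => gtgt D k' g
  end.

(* source / target of a term regarded as an n-cell (n >= 1) *)
Fixpoint tsrc (n : nat) (t : tm) : tm :=
  match t with
  | tgen k g => gen_src k g
  | tid u => u
  | tcomp i u v => if Nat.eqb (S i) n then tsrc n u
                   else tcomp i (tsrc n u) (tsrc n v)
  end.
Fixpoint ttgt (n : nat) (t : tm) : tm :=
  match t with
  | tgen k g => gen_tgt k g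
  | tid u => u
  | tcomp i u v => if Nat.eqb (S i) n then ttgt n v
                   else tcomp i (ttgt n u) (ttgt n v)
  end.

(* iterated source/target: from an n-cell down to dimension n - m *)
Fixpoint iter_src (m n : nat) (t : tm) : tm :=
  match m with 0 => t | S m' => iter_src m' (pred n) (tsrc n t) end.
Fixpoint iter_tgt (m n : nat) (t : tm) : tm :=
  match m with 0 => t | S m' => iter_tgt m' (pred n) (ttgt n t) end.
Definition srci (i n : nat) (t : tm) : tm := iter_src (n - i) n t.
Definition tgti (i n : nat) (t : tm) : tm := iter_tgt (n - i) n t.

Fixpoint idn (m : nat) (t : tm) : tm :=
  match m with 0 => t | S m' => tid (idn m' t) end.

(* wt n t : t is an n-cell of the free precategory;
   eqv n t u : t and u are equal n-cells of the free precategory. *)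
Inductive wt : nat -> tm -> Prop :=
| wt_gen : forall k (g : gen D k), wt k (tgen k g)
| wt_id : forall n t, wt n t -> wt (S n) (tid t)
| wt_comp : forall n i u v, i < n -> wt n u -> wt n v ->
    eqv i (tgti i n u) (srci i n v) -> wt n (tcomp i u v)
with eqv : nat -> tm -> tm -> Prop :=
| eqv_refl : forall n t, wt n t -> eqv n t t
| eqv_sym : forall n t u, eqv n t u -> eqv n u t
| eqv_trans : forall n t u w, eqv n t u -> eqv n u w -> eqv n t w
| eqv_id : forall n t t', eqv n t t' -> eqv (S n) (tid t) (tid t')
| eqv_comp : forall n i u u' v v', eqv n u u' -> eqv n v v' ->
    wt n (tcomp i u v) -> wt n (tcomp i u' v') ->
    eqv n (tcomp i u v) (tcomp i u' v')
| eqv_unit_l : forall n i u, i < n -> wt n u ->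
    eqv n (tcomp i (idn (n - i) (srci i n u)) u) u
| eqv_unit_r : forall n i u, i < n -> wt n u ->
    eqv n (tcomp i u (idn (n - i) (tgti i n u))) u
| eqv_assoc : forall n i u v w,
    wt n (tcomp i (tcomp i u v) w) -> wt n (tcomp i u (tcomp i v w)) ->
    eqv n (tcomp i (tcomp i u v) w) (tcomp i u (tcomp i v w))
| eqv_id_comp : forall n i u v, wt n (tcomp i u v) ->
    eqv (S n) (tid (tcomp i u v)) (tcomp i (tid u) (tid v)).

End Free.

Record polygraph : Type := {
  pdata :> pgdata;
  pg_src_wt : forall k (g : gen pdata (S k)), wt pdata k (gsrc pdata k g);
  pg_tgt_wt : forall k (g : gen pdata (S k)), wt pdata k (gtgt pdata k g);
  pg_glob_s : forall k (g : gen pdata (S (S k))),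
      eqv pdata k (tsrc pdata (S k) (gsrc pdata (S k) g))
                  (tsrc pdata (S k) (gtgt pdata (S k) g));
  pg_glob_t : forall k (g : gen pdata (S (S k))),
      eqv pdata k (ttgt pdata (S k) (gsrc pdata (S k) g))
                  (ttgt pdata (S k) (gtgt pdata (S k) g)) }.

Fixpoint tmap {G H : nat -> Type} (f : forall k, G k -> H k) (t : term G)
  : term H :=
  match t with
  | tgen k g => tgen k (f k g)
  | tid u => tid (tmap f u)
  | tcomp i u v => tcomp i (tmap f u) (tmap f v)
  end.

Record hom (P Q : polygraph) : Type := {
  hmap :> forall k, gen P k -> gen Q k;
  hom_src : forall k (g : gen P (S k)),
      eqv Q k (tmap hmap (gsrc P k g)) (gsrc Q k (hmap (S k) g));
  hom_tgt : forall k (g : gen P (S k)),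
      eqv Q k (tmap hmap (gtgt P k g)) (gtgt Q k (hmap (S k) g)) }.

Definition hom_eq {G H : nat -> Type} (F1 F2 : forall k, G k -> H k) :=
  forall k g, F1 k g = F2 k g.

Definition mono (P Q : polygraph) (F : hom P Q) : Prop :=
  forall (R : polygraph) (H1 H2 : hom R P),
    hom_eq (fun k g => F k (H1 k g)) (fun k g => F k (H2 k g)) ->
    hom_eq H1 H2.

Record eltP : Type := { ep : polygraph; ek : nat; eg : gen ep ek }.

Definition eltP_mor (X Y : eltP) (F : hom (ep X) (ep Y)) : Prop :=
  existT (gen (ep Y)) (ek X) (F (ek X) (eg X)) = existT (gen (ep Y)) (ek Y) (eg Y).

Definition eltP_iso (X Y : eltP) (F : hom (ep X) (ep Y)) : Prop :=
  eltP_mor X Y F /\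
  exists G : hom (ep Y) (ep X), eltP_mor Y X G /\
    hom_eq (fun k g => G k (F k g)) (fun k g => g) /\
    hom_eq (fun k g => F k (G k g)) (fun k g => g).

Definition principalP (X : eltP) : Prop :=
  forall (Y : eltP) (F : hom (ep Y) (ep X)),
    eltP_mor Y X F -> mono F -> eltP_iso Y X F.

Definition primitiveP (X : eltP) : Prop :=
  principalP X /\
  forall (Y : eltP) (F : hom (ep Y) (ep X)),
    principalP Y -> eltP_mor Y X F -> eltP_iso Y X F.

Definition plex (X : eltP) : Prop := primitiveP X.

Record eltC : Type := {
  cp : polygraph; cn : nat; ct : term (gen cp); cwt : wt cp cn ct }.

(* F^star(x) = y in P^star (equality of cells: same dimension, equivalent terms) *)
Definition eltC_mor (X Y : eltC) (F : hom (cp X) (cp Y)) : Prop :=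
  cn X = cn Y /\ eqv (cp Y) (cn Y) (tmap F (ct X)) (ct Y).

Definition eltC_iso (X Y : eltC) (F : hom (cp X) (cp Y)) : Prop :=
  eltC_mor X Y F /\
  exists G : hom (cp Y) (cp X), eltC_mor Y X G /\
    hom_eq (fun k g => G k (F k g)) (fun k g => g) /\
    hom_eq (fun k g => F k (G k g)) (fun k g => g).

Definition principalC (X : eltC) : Prop :=
  forall (Y : eltC) (F : hom (cp Y) (cp X)),
    eltC_mor Y X F -> mono F -> eltC_iso Y X F.

Definition primitiveC (X : eltC) : Prop :=
  principalC X /\
  forall (Y : eltC) (F : hom (cp Y) (cp X)),
    principalC Y -> eltC_mor Y X F -> eltC_iso Y X F.

Definition polyplex (X : eltC) : Prop := primitiveC X.

Definition U (X : eltP) : eltC :=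
  {| cp := ep X; cn := ek X; ct := tgen (ek X) (eg X);
     cwt := @wt_gen (ep X) (ek X) (eg X) |}.

(* Main.v *)
Require Import Defs.
From Stdlib Require Import Arith Lia List Wf_nat Eqdep_dec.
Import ListNotations.

Scheme wt_ind2 := Induction for wt Sort Prop with eqv_ind2 := Induction for eqv Sort Prop.
Combined Scheme wt_eqv_ind from wt_ind2, eqv_ind2.

Section Basic.
Variable D : pgdata.

Lemma srci_S i m u : i <= m -> srci D i (S m) u = srci D i m (tsrc D (S m) u).
Proof. intro H. unfold srci. replace (S m - i) with (S (m - i)) by lia. reflexivity. Qed.
Lemma tgti_S i m u : i <= m -> tgti D i (S m) u = tgti D i m (ttgt D (S m) u).
Proof. intro H. unfold tgti. replace (S m - i) with (S (m - i)) by lia. reflexivity. Qed.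
Lemma srci_n n u : srci D n n u = u.
Proof. unfold srci. rewrite Nat.sub_diag. reflexivity. Qed.
Lemma tgti_n n u : tgti D n n u = u.
Proof. unfold tgti. rewrite Nat.sub_diag. reflexivity. Qed.
Lemma srci_Sn m u : srci D m (S m) u = tsrc D (S m) u.
Proof. rewrite srci_S by lia. apply srci_n. Qed.
Lemma tgti_Sn m u : tgti D m (S m) u = ttgt D (S m) u.
Proof. rewrite tgti_S by lia. apply tgti_n. Qed.
Lemma iter_tgt_idn k d x : iter_tgt D k d (idn D k x) = x.
Proof. revert d; induction k; intro d; simpl; auto. Qed.
Lemma iter_src_idn k d x : iter_src D k d (idn D k x) = x.
Proof. revert d; induction k; intro d; simpl; auto. Qed.
Lemma tgti_idn i n x : tgti D i n (idn D (n - i) x) = x.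
Proof. apply iter_tgt_idn. Qed.
Lemma srci_idn i n x : srci D i n (idn D (n - i) x) = x.
Proof. apply iter_src_idn. Qed.
Lemma wt_idn k i x : wt D i x -> wt D (k + i) (idn D k x).
Proof. induction k; simpl; intros; auto. apply wt_id; auto. Qed.
Lemma wt_idn' i n x : i <= n -> wt D i x -> wt D n (idn D (n - i) x).
Proof. intros. replace n with ((n - i) + i) at 1 by lia. apply wt_idn; auto. Qed.
Lemma eqv_idn k i x y : eqv D i x y -> eqv D (k + i) (idn D k x) (idn D k y).
Proof. induction k; simpl; intros; auto. apply eqv_id; auto. Qed.
Lemma eqv_idn' i n x y : i <= n -> eqv D i x y -> eqv D n (idn D (n - i) x) (idn D (n - i) y).
Proof. intros. replace n with ((n - i) + i) at 1 by lia. apply eqv_idn; auto. Qed.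
Lemma tsrc_idn k d x : tsrc D d (idn D (S k) x) = idn D k x.
Proof. reflexivity. Qed.
Lemma idn_S k x : idn D (S k) x = tid (idn D k x).
Proof. reflexivity. Qed.

End Basic.

Section Level.
Variable P : polygraph.

Definition Aw n t := forall m, n = S m -> wt P m (tsrc P n t) /\ wt P m (ttgt P n t).
Definition Cw n t := forall m', n = S (S m') ->
  eqv P m' (tsrc P (S m') (tsrc P n t)) (tsrc P (S m') (ttgt P n t)) /\
  eqv P m' (ttgt P (S m') (tsrc P n t)) (ttgt P (S m') (ttgt P n t)).
Definition Be n t u := forall m, n = S m ->
  eqv P m (tsrc P n t) (tsrc P n u) /\ eqv P m (ttgt P n t) (ttgt P n u).
Definition Level n :=
  (forall t, wt P n t -> Aw n t /\ Cw n t) /\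
  (forall t u, eqv P n t u -> wt P n t /\ wt P n u /\ Be n t u).
Definition Low N := forall d, d <= N -> Level d.

Lemma Low_S N : Low (S N) -> Low N.
Proof. intros H d Hd; apply H; lia. Qed.

Lemma L_srci_wt N : Low N -> forall x i, wt P N x -> i <= N ->
  wt P i (srci P i N x) /\ wt P i (tgti P i N x).
Proof.
  induction N; intros HL x i Hx Hi.
  - assert (i = 0) by lia; subst. rewrite srci_n, tgti_n; auto.
  - destruct (Nat.eq_dec i (S N)) as [->|Hne].
    + rewrite srci_n, tgti_n; auto.
    + rewrite srci_S, tgti_S by lia.
      destruct (proj1 (HL (S N) (le_n _)) x Hx) as [HA _].
      destruct (HA N eq_refl).
      split; apply IHN; auto using Low_S; lia.
Qed.

Lemma L_srci_eqv N : Low N -> forall x y i, eqv P N x y -> i <= N ->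
  eqv P i (srci P i N x) (srci P i N y) /\ eqv P i (tgti P i N x) (tgti P i N y).
Proof.
  induction N; intros HL x y i Hx Hi.
  - assert (i = 0) by lia; subst. rewrite !srci_n, !tgti_n; auto.
  - destruct (Nat.eq_dec i (S N)) as [->|Hne].
    + rewrite !srci_n, !tgti_n; auto.
    + rewrite !srci_S, !tgti_S by lia.
      destruct (proj2 (HL (S N) (le_n _)) x y Hx) as (_ & _ & HB).
      destruct (HB N eq_refl).
      split; apply IHN; auto using Low_S; lia.
Qed.

Lemma L_parallel M : Low M -> forall x y i,
  eqv P M (tsrc P (S M) x) (tsrc P (S M) y) ->
  eqv P M (ttgt P (S M) x) (ttgt P (S M) y) -> i <= M ->
  eqv P i (srci P i (S M) x) (srci P i (S M) y) /\
  eqv P i (tgti P i (S M) x) (tgti P i (S M) y).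
Proof.
  intros HL x y i H1 H2 Hi. rewrite !srci_S, !tgti_S by lia.
  split; apply L_srci_eqv; auto.
Qed.

Lemma L_reg N : Low N -> forall x y, eqv P N x y -> wt P N x /\ wt P N y.
Proof. intros HL x y H. destruct (proj2 (HL N (le_n _)) x y H) as (? & ? & _). auto. Qed.

End Level.

Section Comp.
Variable D : pgdata.
Lemma tsrc_top n i u v : S i = n -> tsrc D n (tcomp i u v) = tsrc D n u.
Proof. intros <-. simpl. rewrite Nat.eqb_refl. reflexivity. Qed.
Lemma ttgt_top n i u v : S i = n -> ttgt D n (tcomp i u v) = ttgt D n v.
Proof. intros <-. simpl. rewrite Nat.eqb_refl. reflexivity. Qed.
Lemma tsrc_low n i u v : S i <> n -> tsrc D n (tcomp i u v) = tcomp i (tsrc D n u) (tsrc D n v).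
Proof. intros H. change (tsrc D n (tcomp i u v)) with (if Nat.eqb (S i) n then tsrc D n u else tcomp i (tsrc D n u) (tsrc D n v)).
 apply Nat.eqb_neq in H. rewrite H. reflexivity. Qed.
Lemma ttgt_low n i u v : S i <> n -> ttgt D n (tcomp i u v) = tcomp i (ttgt D n u) (ttgt D n v).
Proof. intros H. change (ttgt D n (tcomp i u v)) with (if Nat.eqb (S i) n then ttgt D n v else tcomp i (ttgt D n u) (ttgt D n v)).
 apply Nat.eqb_neq in H. rewrite H. reflexivity. Qed.
End Comp.

Section Main.
Variable P : polygraph.

Lemma srci_wt_top m u : Low P m -> Aw P (S m) u -> forall i, i <= S m ->
  wt P (S m) u -> wt P i (srci P i (S m) u) /\ wt P i (tgti P i (S m) u).
Proof.
  intros HL HA i Hi Hu. destruct (Nat.eq_dec i (S m)) as [->|Hne].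
  - rewrite srci_n, tgti_n; auto.
  - rewrite srci_S, tgti_S by lia. destruct (HA m eq_refl).
    split; apply L_srci_wt; auto; lia.
Qed.

Theorem level_all : forall n, Level P n.
Proof.
  intro n; induction n as [n IH] using lt_wf_ind.
  assert (HL : forall N, N < n -> Low P N) by (intros N HN d Hd; apply IH; lia).
  assert (H : (forall d t (w : wt P d t), d = n -> Aw P d t /\ Cw P d t) /\
              (forall d t u (e : eqv P d t u), d = n -> wt P d t /\ wt P d u /\ Be P d t u)).
  { apply (wt_eqv_ind P (fun d t _ => d = n -> Aw P d t /\ Cw P d t)
                        (fun d t u _ => d = n -> wt P d t /\ wt P d u /\ Be P d t u)).
    -
      intros k g Hk. split.
      + intros m ->. simpl. split; [apply pg_src_wt | apply pg_tgt_wt].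
      + intros m' ->. simpl. split; [apply pg_glob_s | apply pg_glob_t].
    -
      intros n0 t w _ Hn. split.
      + intros m Hm. injection Hm as <-. simpl. auto.
      + intros m' Hm. injection Hm as ->. simpl.
        assert (L : Level P (S m')) by (apply IH; lia).
        destruct (proj1 L t w) as [A _]. destruct (A m' eq_refl).
        split; apply eqv_refl; auto.
    -
      intros n0 i u v l wu IHu wv IHv e _ Hn. subst n0.
      destruct (IHu eq_refl) as [Au Cu]. destruct (IHv eq_refl) as [Av Cv].
      assert (A : Aw P n (tcomp i u v)).
      { intros m ->. destruct (Au m eq_refl) as [wsu wtu]. destruct (Av m eq_refl) as [wsv wtv].
        destruct (Nat.eq_dec (S i) (S m)) as [Heq|Hne].
        - rewrite tsrc_top, ttgt_top by auto. auto.
        - rewrite tsrc_low, ttgt_low by auto.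
          destruct m as [|m']; [lia|].
          destruct (Cu m' eq_refl) as [c1 c2]. destruct (Cv m' eq_refl) as [d1 d2].
          destruct (L_parallel P m' (HL m' ltac:(lia)) _ _ i c1 c2 ltac:(lia)) as [p1 p2].
          destruct (L_parallel P m' (HL m' ltac:(lia)) _ _ i d1 d2 ltac:(lia)) as [q1 q2].
          split; apply wt_comp; auto; try lia.
          + eapply eqv_trans; [exact p2|]. rewrite <- tgti_S by lia. rewrite <- srci_S by lia. exact e.
          + rewrite <- tgti_S by lia. eapply eqv_trans; [exact e|]. rewrite srci_S by lia. exact q1. }
      split; [exact A|].
      intros m' Hm. subst n. destruct (A (S m') eq_refl) as [wS wT].
      assert (L : Level P (S m')) by (apply IH; lia).
      destruct (Cu m' eq_refl) as [c1 c2]. destruct (Cv m' eq_refl) as [d1 d2].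
      destruct (Nat.eq_dec i (S m')) as [->|Hne1].
      + rewrite tsrc_top, ttgt_top in * by auto.
        rewrite tgti_Sn, srci_Sn in e.
        destruct (proj2 L _ _ e) as (_ & _ & B). destruct (B m' eq_refl) as [b1 b2].
        split; eapply eqv_trans; try exact c1; try exact c2;
          (eapply eqv_trans; [eassumption|]); assumption.
      + rewrite tsrc_low, ttgt_low in * by lia.
        destruct (Nat.eq_dec i m') as [->|Hne2].
        * rewrite !tsrc_top, !ttgt_top by auto. auto.
        * rewrite !tsrc_low, !ttgt_low by lia.
          destruct (proj1 L _ wS) as [AS _]. destruct (proj1 L _ wT) as [AT _].
          destruct (AS m' eq_refl) as [s1 s2]. destruct (AT m' eq_refl) as [t1 t2].
          rewrite tsrc_low, ttgt_low in * by lia.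
          split; apply eqv_comp; auto.
    -
      intros n0 t w IHw Hn. destruct (IHw Hn) as [A _]. subst.
      split; [auto|split; [auto|]]. intros m Hm. destruct (A m Hm). split; apply eqv_refl; auto.
    -
      intros n0 t u e IHe Hn. destruct (IHe Hn) as (? & ? & B).
      split; [auto|split; [auto|]]. intros m Hm. destruct (B m Hm). split; apply eqv_sym; auto.
    -
      intros n0 t u w e IHe e0 IHe0 Hn. destruct (IHe Hn) as (? & ? & B). destruct (IHe0 Hn) as (? & ? & B0).
      split; [auto|split; [auto|]]. intros m Hm. destruct (B m Hm). destruct (B0 m Hm).
      split; eapply eqv_trans; eauto.
    -
      intros n0 t t' e _ Hn. subst n.
      assert (L : Level P n0) by (apply IH; lia).
      destruct (proj2 L _ _ e) as (w1 & w2 & _).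
      split; [apply wt_id; auto | split; [apply wt_id; auto|]].
      intros m Hm. injection Hm as <-. simpl. auto.
    -
      intros n0 i u u' v v' e IHe e0 IHe0 w IHw w0 IHw0 Hn. subst n0.
      destruct (IHe eq_refl) as (_ & _ & B). destruct (IHe0 eq_refl) as (_ & _ & B0).
      destruct (IHw eq_refl) as [A _]. destruct (IHw0 eq_refl) as [A0 _].
      split; [auto | split; [auto|]].
      intros m ->. destruct (B m eq_refl). destruct (B0 m eq_refl).
      destruct (A m eq_refl) as [a1 a2]. destruct (A0 m eq_refl) as [a3 a4].
      destruct (Nat.eq_dec (S i) (S m)) as [Heq|Hne].
      + rewrite !tsrc_top, !ttgt_top by auto. auto.
      + rewrite !tsrc_low, !ttgt_low in * by auto. split; apply eqv_comp; auto.
    -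
      intros n0 i u l w IHw Hn. subst n0. destruct (IHw eq_refl) as [Au Cu].
      destruct n as [|m]; [lia|].
      destruct (srci_wt_top m u (HL m ltac:(lia)) Au i ltac:(lia) w) as [ws _].
      assert (wL : wt P (S m) (tcomp i (idn P (S m - i) (srci P i (S m) u)) u)).
      { apply wt_comp; auto. apply wt_idn'; auto; lia. rewrite tgti_idn. apply eqv_refl; auto. }
      split; [exact wL | split; [exact w|]].
      intros m0 Hm. injection Hm as <-. destruct (Au m eq_refl) as [wsu wtu].
      destruct (Nat.eq_dec i m) as [->|Hne].
      + rewrite tsrc_top, ttgt_top by auto. replace (S m - m) with 1 by lia. simpl.
        rewrite srci_Sn. split; apply eqv_refl; auto.
      + rewrite tsrc_low, ttgt_low by lia. replace (S m - i) with (S (m - i)) by lia. simpl.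
        rewrite srci_S by lia.
        split; [apply eqv_unit_l; auto; lia|].
        destruct m as [|m']; [lia|].
        destruct (Cu m' eq_refl) as [c1 c2].
        destruct (L_parallel P m' (HL m' ltac:(lia)) _ _ i c1 c2 ltac:(lia)) as [p1 p2].
        assert (LS : Level P (S m')) by (apply IH; lia).
        destruct (L_srci_wt P (S m') (HL (S m') ltac:(lia)) _ i wsu ltac:(lia)) as [ws' _].
        eapply eqv_trans; [| apply (eqv_unit_l (i:=i)); auto; lia].
        apply eqv_comp.
        * apply eqv_idn'; auto; lia.
        * apply eqv_refl; auto.
        * apply wt_comp; auto; try lia. apply wt_idn'; auto; lia. rewrite tgti_idn. exact p1.
        * destruct (proj2 LS _ _ (eqv_unit_l (i:=i) (n:=S m') ltac:(lia) wtu)) as (? & _). assumption.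
    -
      intros n0 i u l w IHw Hn. subst n0. destruct (IHw eq_refl) as [Au Cu].
      destruct n as [|m]; [lia|].
      destruct (srci_wt_top m u (HL m ltac:(lia)) Au i ltac:(lia) w) as [_ ws].
      assert (wR : wt P (S m) (tcomp i u (idn P (S m - i) (tgti P i (S m) u)))).
      { apply wt_comp; auto. apply wt_idn'; auto; lia. rewrite srci_idn. apply eqv_refl; auto. }
      split; [exact wR | split; [exact w|]].
      intros m0 Hm. injection Hm as <-. destruct (Au m eq_refl) as [wsu wtu].
      destruct (Nat.eq_dec i m) as [->|Hne].
      + rewrite tsrc_top, ttgt_top by auto. replace (S m - m) with 1 by lia. simpl.
        rewrite tgti_Sn. split; apply eqv_refl; auto.
      + rewrite tsrc_low, ttgt_low by lia. replace (S m - i) with (S (m - i)) by lia. simpl.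
        rewrite tgti_S by lia.
        split; [|apply eqv_unit_r; auto; lia].
        destruct m as [|m']; [lia|].
        destruct (Cu m' eq_refl) as [c1 c2].
        destruct (L_parallel P m' (HL m' ltac:(lia)) _ _ i c1 c2 ltac:(lia)) as [p1 p2].
        assert (LS : Level P (S m')) by (apply IH; lia).
        destruct (L_srci_wt P (S m') (HL (S m') ltac:(lia)) _ i wtu ltac:(lia)) as [_ ws'].
        eapply eqv_trans; [| apply (eqv_unit_r (i:=i)); auto; lia].
        apply eqv_comp.
        * apply eqv_refl; auto.
        * apply eqv_idn'; auto; try lia. apply eqv_sym; exact p2.
        * apply wt_comp; auto; try lia. apply wt_idn'; auto; lia. rewrite srci_idn. exact p2.
        * destruct (proj2 LS _ _ (eqv_unit_r (i:=i) (n:=S m') ltac:(lia) wsu)) as (? & _). assumption.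
    -
      intros n0 i u v w w1 IH1 w2 IH2 Hn. subst n0.
      destruct (IH1 eq_refl) as [A1 _]. destruct (IH2 eq_refl) as [A2 _].
      split; [auto | split; [auto|]].
      intros m ->. destruct (A1 m eq_refl) as [a1 a2]. destruct (A2 m eq_refl) as [a3 a4].
      destruct (Nat.eq_dec (S i) (S m)) as [Heq|Hne].
      + rewrite !tsrc_top, !ttgt_top in * by auto. split; apply eqv_refl; auto.
      + rewrite !tsrc_low, !ttgt_low in * by auto. split; apply eqv_assoc; auto.
    -
      intros n0 i u v w _ Hn. subst n.
      inversion w; subst.
      split; [apply wt_id; auto | split].
      + apply wt_comp; try lia; try (apply wt_id; assumption).
        rewrite tgti_S, srci_S by lia. simpl. assumption.
      + intros m Hm. injection Hm as <-. simpl tsrc. simpl ttgt.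
        assert (Hb : (i =? n0) = false) by (apply Nat.eqb_neq; lia). rewrite Hb.
        split; apply eqv_refl; auto. }
  destruct H as [H1 H2]. split; intros; eauto.
Qed.

Corollary low_all N : Low P N.
Proof. intros d _; apply level_all. Qed.

Lemma wt_tsrc n t : wt P (S n) t -> wt P n (tsrc P (S n) t) /\ wt P n (ttgt P (S n) t).
Proof. intro w. destruct (proj1 (level_all (S n)) t w) as [A _]. apply A; auto. Qed.
Lemma eqv_tsrc n t u : eqv P (S n) t u -> eqv P n (tsrc P (S n) t) (tsrc P (S n) u) /\ eqv P n (ttgt P (S n) t) (ttgt P (S n) u).
Proof. intro w. destruct (proj2 (level_all (S n)) t u w) as (_ & _ & B). apply B; auto. Qed.
Lemma eqv_reg n t u : eqv P n t u -> wt P n t /\ wt P n u.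
Proof. intro w. destruct (proj2 (level_all n) t u w) as (? & ? & _). auto. Qed.
Lemma glob n t : wt P (S (S n)) t ->
  eqv P n (tsrc P (S n) (tsrc P (S (S n)) t)) (tsrc P (S n) (ttgt P (S (S n)) t)) /\
  eqv P n (ttgt P (S n) (tsrc P (S (S n)) t)) (ttgt P (S n) (ttgt P (S (S n)) t)).
Proof. intro w. destruct (proj1 (level_all (S (S n))) t w) as [_ C]. apply C; auto. Qed.
Lemma srci_wt N x i : wt P N x -> i <= N -> wt P i (srci P i N x) /\ wt P i (tgti P i N x).
Proof. intros; apply L_srci_wt; auto using low_all. Qed.
Lemma srci_eqv N x y i : eqv P N x y -> i <= N -> eqv P i (srci P i N x) (srci P i N y) /\ eqv P i (tgti P i N x) (tgti P i N y).
Proof. intros; apply L_srci_eqv; auto using low_all. Qed.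

End Main.

Section Map.
Variables P Q : polygraph.
Variable G : hom P Q.

Lemma tmap_idn k x : tmap G (idn P k x) = idn Q k (tmap G x).
Proof. induction k; simpl; congruence. Qed.

Definition Comm n t := forall m, n = S m ->
  eqv Q m (tmap G (tsrc P n t)) (tsrc Q n (tmap G t)) /\
  eqv Q m (tmap G (ttgt P n t)) (ttgt Q n (tmap G t)).
Definition TLevel n :=
  (forall t, wt P n t -> wt Q n (tmap G t) /\ Comm n t) /\
  (forall t u, eqv P n t u -> eqv Q n (tmap G t) (tmap G u)).
Definition TLow N := forall d, d <= N -> TLevel d.

Lemma TL_srci N : TLow N -> forall x i, wt P N x -> i <= N ->
  eqv Q i (tmap G (srci P i N x)) (srci Q i N (tmap G x)) /\
  eqv Q i (tmap G (tgti P i N x)) (tgti Q i N (tmap G x)).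
Proof.
  induction N; intros HL x i Hx Hi.
  - assert (i = 0) by lia; subst. rewrite !srci_n, !tgti_n.
    destruct (proj1 (HL 0 (le_n _)) x Hx). split; apply eqv_refl; auto.
  - destruct (Nat.eq_dec i (S N)) as [->|Hne].
    + rewrite !srci_n, !tgti_n. destruct (proj1 (HL _ (le_n _)) x Hx). split; apply eqv_refl; auto.
    + rewrite !srci_S, !tgti_S by lia.
      destruct (proj1 (HL (S N) (le_n _)) x Hx) as [wx C].
      destruct (C N eq_refl) as [c1 c2].
      destruct (wt_tsrc P N x Hx) as [w1 w2].
      assert (HL' : TLow N) by (intros d Hd; apply HL; lia).
      destruct (IHN HL' _ i w1 ltac:(lia)) as [a1 _].
      destruct (IHN HL' _ i w2 ltac:(lia)) as [_ a2].
      destruct (srci_eqv Q N _ _ i c1 ltac:(lia)) as [b1 _].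
      destruct (srci_eqv Q N _ _ i c2 ltac:(lia)) as [_ b2].
      split; eapply eqv_trans; eauto.
Qed.

Lemma TL_srci_top M : TLow M -> forall x i, wt P (S M) x -> Comm (S M) x -> wt Q (S M) (tmap G x) -> i <= S M ->
  eqv Q i (tmap G (srci P i (S M) x)) (srci Q i (S M) (tmap G x)) /\
  eqv Q i (tmap G (tgti P i (S M) x)) (tgti Q i (S M) (tmap G x)).
Proof.
  intros HL x i Hx C wx Hi.
  destruct (Nat.eq_dec i (S M)) as [->|Hne].
  + rewrite !srci_n, !tgti_n. split; apply eqv_refl; auto.
  + rewrite !srci_S, !tgti_S by lia.
    destruct (C M eq_refl) as [c1 c2].
    destruct (wt_tsrc P M x Hx) as [w1 w2].
    destruct (TL_srci M HL _ i w1 ltac:(lia)) as [a1 _].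
    destruct (TL_srci M HL _ i w2 ltac:(lia)) as [_ a2].
    destruct (srci_eqv Q M _ _ i c1 ltac:(lia)) as [b1 _].
    destruct (srci_eqv Q M _ _ i c2 ltac:(lia)) as [_ b2].
    split; eapply eqv_trans; eauto.
Qed.

Theorem tlevel_all : forall n, TLevel n.
Proof.
  intro n; induction n as [n IH] using lt_wf_ind.
  assert (HL : forall N, N < n -> TLow N) by (intros N HN d Hd; apply IH; lia).
  assert (H : (forall d t (w : wt P d t), d = n -> wt Q d (tmap G t) /\ Comm d t) /\
              (forall d t u (e : eqv P d t u), d = n -> eqv Q d (tmap G t) (tmap G u))).
  { apply (wt_eqv_ind P (fun d t _ => d = n -> wt Q d (tmap G t) /\ Comm d t)
                        (fun d t u _ => d = n -> eqv Q d (tmap G t) (tmap G u))).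
    - intros k g _. split; [apply wt_gen|].
      intros m ->. simpl. split; [apply hom_src | apply hom_tgt].
    - intros n0 t w _ Hn. subst n.
      destruct (proj1 (IH n0 ltac:(lia)) t w) as [wt' _].
      split; [simpl; apply wt_id; auto|].
      intros m Hm. injection Hm as <-. simpl. split; apply eqv_refl; auto.
    - intros n0 i u v l wu IHu wv IHv e _ Hn. subst n0.
      destruct (IHu eq_refl) as [wu' Cu]. destruct (IHv eq_refl) as [wv' Cv].
      destruct n as [|M]; [lia|].
      assert (Hc : eqv Q i (tgti Q i (S M) (tmap G u)) (srci Q i (S M) (tmap G v))).
      { pose proof (proj2 (IH i l) _ _ e) as e'.
        destruct (TL_srci_top M (HL M ltac:(lia)) u i wu Cu wu' ltac:(lia)) as [_ a].
        destruct (TL_srci_top M (HL M ltac:(lia)) v i wv Cv wv' ltac:(lia)) as [b _].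
        eapply eqv_trans; [apply eqv_sym; exact a|]. eapply eqv_trans; [exact e'|]. exact b. }
      assert (wc : wt Q (S M) (tmap G (tcomp i u v))) by (simpl; apply wt_comp; auto).
      split; [exact wc|].
      intros m Hm. injection Hm as Hm. subst M.
      destruct (Nat.eq_dec (S i) (S m)) as [Heq|Hne].
      + change (tmap G (tcomp i u v)) with (tcomp i (tmap G u) (tmap G v)).
        rewrite !tsrc_top, !ttgt_top by auto. split; [apply (Cu m eq_refl)|apply (Cv m eq_refl)].
      + pose proof (wt_comp l wu wv e) as wP.
        destruct (wt_tsrc P m _ wP) as [s1 s2].
        destruct (wt_tsrc Q m _ wc) as [r1 r2].
        change (tmap G (tcomp i u v)) with (tcomp i (tmap G u) (tmap G v)) in *.
        rewrite !tsrc_low, !ttgt_low in * by auto.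
        destruct (proj1 (IH m ltac:(lia)) _ s1) as [x1 _].
        destruct (proj1 (IH m ltac:(lia)) _ s2) as [x2 _].
        simpl tmap in x1, x2.
        destruct (Cu m eq_refl). destruct (Cv m eq_refl).
        split; apply eqv_comp; auto.
    - intros n0 t w IHw Hn. apply eqv_refl. apply (IHw Hn).
    - intros n0 t u e IHe Hn. apply eqv_sym; auto.
    - intros n0 t u w e IHe e0 IHe0 Hn. eapply eqv_trans; eauto.
    - intros n0 t t' e _ Hn. subst n. simpl. apply eqv_id. apply (proj2 (IH n0 ltac:(lia))); auto.
    - intros n0 i u u' v v' e IHe e0 IHe0 w IHw w0 IHw0 Hn.
      simpl. apply eqv_comp; auto.
      + apply (IHw Hn).
      + apply (IHw0 Hn).
    - intros n0 i u l w IHw Hn. subst n0. destruct (IHw eq_refl) as [wu' Cu].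
      destruct n as [|M]; [lia|].
      cbn [tmap]. rewrite tmap_idn.
      destruct (TL_srci_top M (HL M ltac:(lia)) u i w Cu wu' ltac:(lia)) as [a _].
      destruct (srci_wt P (S M) u i w ltac:(lia)) as [ws _].
      destruct (proj1 (IH i l) _ ws) as [ws' _].
      eapply eqv_trans; [| apply (eqv_unit_l (n:=S M) (i:=i)); auto].
      apply eqv_comp.
      + apply eqv_idn'; auto; lia.
      + apply eqv_refl; auto.
      + apply wt_comp; auto. apply wt_idn'; auto; lia. rewrite tgti_idn. exact a.
      + apply (eqv_reg Q _ _ _ (eqv_unit_l (n:=S M) (i:=i) l wu')).
    - intros n0 i u l w IHw Hn. subst n0. destruct (IHw eq_refl) as [wu' Cu].
      destruct n as [|M]; [lia|].
      cbn [tmap]. rewrite tmap_idn.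
      destruct (TL_srci_top M (HL M ltac:(lia)) u i w Cu wu' ltac:(lia)) as [_ a].
      destruct (srci_wt P (S M) u i w ltac:(lia)) as [_ ws].
      destruct (proj1 (IH i l) _ ws) as [ws' _].
      eapply eqv_trans; [| apply (eqv_unit_r (n:=S M) (i:=i)); auto].
      apply eqv_comp.
      + apply eqv_refl; auto.
      + apply eqv_idn'; auto; lia.
      + apply wt_comp; auto. apply wt_idn'; auto; lia. rewrite srci_idn. apply eqv_sym; exact a.
      + apply (eqv_reg Q _ _ _ (eqv_unit_r (n:=S M) (i:=i) l wu')).
    - intros n0 i u v w w1 IH1 w2 IH2 Hn. simpl. apply eqv_assoc.
      + apply (IH1 Hn).
      + apply (IH2 Hn).
    - intros n0 i u v w _ Hn. subst n. simpl. apply eqv_id_comp.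
      apply (proj1 (IH n0 ltac:(lia)) _ w). }
  destruct H as [H1 H2]. split; intros; eauto.
Qed.

Lemma tmap_wt n t : wt P n t -> wt Q n (tmap G t).
Proof. intro w. apply (proj1 (tlevel_all n) t w). Qed.
Lemma tmap_eqv n t u : eqv P n t u -> eqv Q n (tmap G t) (tmap G u).
Proof. intro w. apply (proj2 (tlevel_all n) t u w). Qed.
Lemma tmap_srci N x i : wt P N x -> i <= N ->
  eqv Q i (tmap G (srci P i N x)) (srci Q i N (tmap G x)).
Proof. intros. apply TL_srci; auto. intros d _; apply tlevel_all. Qed.

End Map.

Fixpoint topgens {G : nat -> Type} (n : nat) (t : term G) : list (sigT G) :=
  match t with
  | tgen k g => if Nat.eqb k n then [existT G k g] else []
  | tid _ => []
  | tcomp _ u v => topgens n u ++ topgens n v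
  end.

Lemma topgens_eqv (D : pgdata) n t u : eqv D n t u -> topgens n t = topgens n u.
Proof.
  induction 1; simpl; auto; try congruence.
  - destruct (n - i) eqn:E; [lia|]. reflexivity.
  - destruct (n - i) eqn:E; [lia|]. simpl. apply app_nil_r.
  - rewrite app_assoc. reflexivity.
Qed.

Lemma topgens_tmap {G H : nat -> Type} (f : forall k, G k -> H k) n t :
  topgens n (tmap f t) = map (fun p => existT H (projT1 p) (f _ (projT2 p))) (topgens n t).
Proof.
  induction t; simpl; auto.
  - destruct (Nat.eqb k n); reflexivity.
  - rewrite map_app; congruence.
Qed.

Lemma topgens_dim {G : nat -> Type} n (t : term G) x : In x (topgens n t) -> projT1 x = n.
Proof.
  induction t; simpl; try tauto.
  - destruct (Nat.eqb_spec k n); simpl; [|tauto]. intros [<-|[]]; auto.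
  - rewrite in_app_iff; tauto.
Qed.

Definition cnt (D : pgdata) m n t := length (topgens m (srci D m n t)).

Lemma cnt_eqv (P : polygraph) n t u m : eqv P n t u -> m <= n -> cnt P m n t = cnt P m n u.
Proof.
  intros H Hm. unfold cnt. destruct (srci_eqv P n t u m H Hm) as [H1 _].
  rewrite (topgens_eqv _ _ _ _ H1). reflexivity.
Qed.

Lemma cnt_tmap (P Q : polygraph) (G : hom P Q) n t m : wt P n t -> m <= n ->
  cnt Q m n (tmap G t) = cnt P m n t.
Proof.
  intros H Hm. unfold cnt. pose proof (tmap_srci P Q G n t m H Hm) as E.
  rewrite <- (topgens_eqv _ _ _ _ E). rewrite topgens_tmap, length_map. reflexivity.
Qed.

Lemma iter_src_comp (D : pgdata) i k n u v : i + k < n ->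
  iter_src D k n (tcomp i u v) = tcomp i (iter_src D k n u) (iter_src D k n v).
Proof.
  revert n u v; induction k; intros n u v Hn; [reflexivity|].
  change (iter_src D k (pred n) (tsrc D n (tcomp i u v)) = tcomp i (iter_src D k (pred n) (tsrc D n u)) (iter_src D k (pred n) (tsrc D n v))).
  rewrite tsrc_low by lia. apply IHk. lia.
Qed.

Lemma srci_comp_hi (D : pgdata) i m n u v : i < m -> m <= n ->
  srci D m n (tcomp i u v) = tcomp i (srci D m n u) (srci D m n v).
Proof. intros. unfold srci. apply iter_src_comp. lia. Qed.

Lemma cnt_comp_hi (D : pgdata) i m n u v : i < m -> m <= n ->
  cnt D m n (tcomp i u v) = cnt D m n u + cnt D m n v.
Proof. intros. unfold cnt. rewrite srci_comp_hi by auto. simpl. apply length_app. Qed.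

Section Norm.
Variable P : polygraph.

Lemma genfree_id n u : wt P n u -> topgens n u = [] -> forall m, n = S m ->
  eqv P n u (tid (tsrc P n u)).
Proof.
  induction 1 as [k g | n0 t w _ | n0 i u v l wu IHu wv IHv e]; intros Ht m Hm.
  - simpl in Ht. rewrite Nat.eqb_refl in Ht. discriminate.
  - simpl. apply eqv_refl. apply wt_id; auto.
  - subst n0. simpl in Ht. apply app_eq_nil in Ht as [Hu Hv].
    specialize (IHu Hu m eq_refl). specialize (IHv Hv m eq_refl).
    pose proof (wt_comp l wu wv e) as wt0.
    destruct (wt_tsrc P m _ wu) as [wa _]. destruct (wt_tsrc P m _ wv) as [wb _].
    set (a := tsrc P (S m) u) in *. set (b := tsrc P (S m) v) in *.
    destruct (Nat.eq_dec i m) as [->|Hne].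
    + rewrite tsrc_top by auto.
      rewrite tgti_Sn, srci_Sn in e.
      destruct (eqv_tsrc P m _ _ IHu) as [_ Ta]. simpl in Ta.
      assert (ab : eqv P m a b) by (eapply eqv_trans; [apply eqv_sym; exact Ta|exact e]).
      eapply eqv_trans with (tcomp m (tid a) (tid a)).
      * apply eqv_comp; auto.
        -- eapply eqv_trans; [exact IHv|]. apply eqv_id. apply eqv_sym; auto.
        -- apply wt_comp; try lia; try (apply wt_id; auto).
           rewrite tgti_Sn, srci_Sn. simpl. apply eqv_refl; auto.
      * pose proof (eqv_unit_r (n:=S m) (i:=m) (le_n _) (wt_id wa)) as U.
        rewrite tgti_Sn in U. replace (S m - m) with 1 in U by lia. simpl in U. exact U.
    + rewrite tsrc_low by lia.
      destruct (srci_eqv P _ _ _ i IHu ltac:(lia)) as [_ E1].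
      destruct (srci_eqv P _ _ _ i IHv ltac:(lia)) as [E2 _].
      eapply eqv_trans with (tcomp i (tid a) (tid b)).
      * apply eqv_comp; auto.
        apply wt_comp; try lia; try (apply wt_id; auto).
        eapply eqv_trans; [apply eqv_sym; exact E1|]. eapply eqv_trans; [exact e|]. exact E2.
      * apply eqv_sym. apply eqv_id_comp.
        destruct (wt_tsrc P m _ wt0) as [w1 _]. rewrite tsrc_low in w1 by lia. exact w1.
Qed.

Lemma trivial_id n : forall i u, i < n -> wt P n u -> topgens n u = [] ->
  (forall m, i < m < n -> cnt P m n u = 0) ->
  eqv P n u (idn P (n - i) (srci P i n u)).
Proof.
  induction n; intros i u Hi wu Ht Hc; [lia|].
  pose proof (genfree_id (S n) u wu Ht n eq_refl) as E.
  destruct (wt_tsrc P n u wu) as [wa _].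
  destruct (Nat.eq_dec i n) as [->|Hne].
  - replace (S n - n) with 1 by lia. rewrite srci_Sn. exact E.
  - assert (Hta : topgens n (tsrc P (S n) u) = []).
    { assert (H0 := Hc n ltac:(lia)). unfold cnt in H0. rewrite srci_Sn in H0.
      apply length_zero_iff_nil; auto. }
    assert (Hca : forall m, i < m < n -> cnt P m n (tsrc P (S n) u) = 0).
    { intros m Hm. unfold cnt. rewrite <- srci_S by lia. apply Hc. lia. }
    pose proof (IHn i _ ltac:(lia) wa Hta Hca) as E2.
    rewrite <- srci_S in E2 by lia.
    eapply eqv_trans; [exact E|].
    replace (S n - i) with (S (n - i)) by lia. simpl. apply eqv_id. exact E2.
Qed.

End Norm.

Lemma max_lemma (f : nat -> nat) i n :
  (forall m, i < m < n -> f m = 0) \/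
  exists J, i < J < n /\ 0 < f J /\ forall m, J < m < n -> f m = 0.
Proof.
  induction n.
  - left; intros; lia.
  - destruct (Nat.lt_ge_cases i n) as [Hin|Hin].
    + destruct (Nat.eq_dec (f n) 0) as [Hf|Hf].
      * destruct IHn as [H|(J & H1 & H2 & H3)].
        -- left. intros m Hm. destruct (Nat.eq_dec m n); subst; auto. apply H; lia.
        -- right. exists J. repeat split; try lia. intros m Hm.
           destruct (Nat.eq_dec m n); subst; auto. apply H3; lia.
      * right. exists n. repeat split; try lia.
    + left. intros; lia.
Qed.

Definition lexgt n (a b : nat -> nat) :=
  exists J, J < n /\ b J < a J /\ forall m, J < m < n -> a m = b m.

Lemma lexgt_trans n a b c : lexgt n a b -> lexgt n b c -> lexgt n a c.
Proof.
  intros (J1 & H1 & H2 & H3) (J2 & K1 & K2 & K3).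
  destruct (Nat.lt_total J1 J2) as [Hl|[He|Hl]].
  - exists J2. repeat split; auto.
    + rewrite H3 by lia. auto.
    + intros m Hm. rewrite H3 by lia. apply K3; lia.
  - subst. exists J2. repeat split; auto; try lia.
    intros m Hm. rewrite H3 by lia. apply K3; lia.
  - exists J1. repeat split; auto.
    + rewrite <- K3 by lia. auto.
    + intros m Hm. rewrite H3 by lia. apply K3; lia.
Qed.

Lemma lexgt_ext n a a' b b' : (forall m, m < n -> a m = a' m) -> (forall m, m < n -> b m = b' m) ->
  lexgt n a b -> lexgt n a' b'.
Proof.
  intros Ha Hb (J & H1 & H2 & H3). exists J. repeat split; auto.
  - rewrite <- Ha, <- Hb by lia. auto.
  - intros m Hm. rewrite <- Ha, <- Hb by lia. auto.
Qed.

Lemma lexgt_irrefl n a : ~ lexgt n a a.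
Proof. intros (J & _ & H & _). lia. Qed.

Section Norm2.
Variable P : polygraph.

Lemma combine n t v h :
  (eqv P n t v \/ lexgt n (fun m => cnt P m n t) (fun m => cnt P m n v)) ->
  (eqv P n v h \/ lexgt n (fun m => cnt P m n v) (fun m => cnt P m n h)) ->
  (eqv P n t h \/ lexgt n (fun m => cnt P m n t) (fun m => cnt P m n h)).
Proof.
  intros [A|A] [B|B].
  - left; eapply eqv_trans; eauto.
  - right. eapply lexgt_ext; [| | exact B]; intros m Hm; auto.
    apply cnt_eqv; [apply eqv_sym; auto | lia].
  - right. eapply lexgt_ext; [| | exact A]; intros m Hm; auto.
    apply cnt_eqv; [auto | lia].
  - right. eapply lexgt_trans; eauto.
Qed.

Lemma norm n t : wt P n t -> forall h, topgens n t = [existT (gen P) n h] ->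
  eqv P n t (tgen n h) \/ lexgt n (fun m => cnt P m n t) (fun m => cnt P m n (tgen n h)).
Proof.
  induction 1 as [k g | n0 t w _ | n i u v l wu IHu wv IHv e]; intros h Ht.
  - simpl in Ht. rewrite Nat.eqb_refl in Ht. injection Ht as Ht.
    apply inj_pair2_eq_dec in Ht; [|exact Nat.eq_dec]. subst. left; apply eqv_refl, wt_gen.
  - discriminate.
  - simpl in Ht. destruct (topgens n u) as [|x r] eqn:Eu.
    + simpl in Ht. apply (combine _ _ v); [|apply IHv; auto].
      destruct (max_lemma (fun m => cnt P m n u) i n) as [Z|(J & HJ1 & HJ2 & HJ3)].
      * left. pose proof (trivial_id P n i u l wu Eu Z) as Eid.
        destruct (srci_eqv P n _ _ i Eid ltac:(lia)) as [_ T1']. rewrite tgti_idn in T1'.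
        apply eqv_trans with (tcomp i (idn P (n - i) (srci P i n v)) v).
        -- apply eqv_comp.
           ++ eapply eqv_trans; [exact Eid|]. apply eqv_idn'; [lia|].
              eapply eqv_trans; [apply eqv_sym; exact T1'| exact e].
           ++ apply eqv_refl; auto.
           ++ apply wt_comp; auto.
           ++ apply (eqv_reg P _ _ _ (eqv_unit_l l wv)).
        -- apply eqv_unit_l; auto.
      * right. exists J. split; [lia|split].
        -- rewrite cnt_comp_hi by lia. simpl in HJ2. lia.
        -- intros m Hm. rewrite cnt_comp_hi by lia. rewrite HJ3 by lia. reflexivity.
    + simpl in Ht. injection Ht as Hx Hr. apply app_eq_nil in Hr as [-> Ev]. subst x.
      apply (combine _ _ u); [|apply IHu; auto].
      destruct (max_lemma (fun m => cnt P m n v) i n) as [Z|(J & HJ1 & HJ2 & HJ3)].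
      * left. pose proof (trivial_id P n i v l wv Ev Z) as Eid.
        apply eqv_trans with (tcomp i u (idn P (n - i) (tgti P i n u))).
        -- apply eqv_comp.
           ++ apply eqv_refl; auto.
           ++ eapply eqv_trans; [exact Eid|]. apply eqv_idn'; [lia|]. apply eqv_sym; exact e.
           ++ apply wt_comp; auto.
           ++ apply (eqv_reg P _ _ _ (eqv_unit_r l wu)).
        -- apply eqv_unit_r; auto.
      * right. exists J. split; [lia|split].
        -- rewrite cnt_comp_hi by lia. simpl in HJ2. lia.
        -- intros m Hm. rewrite cnt_comp_hi by lia. rewrite HJ3 by lia. lia.
Qed.
End Norm2.

Lemma tmap_comp_id (P Q : polygraph) (F : hom Q P) (G : hom P Q) t :
  (forall k x, G k (F k x) = x) -> tmap G (tmap F t) = t.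
Proof. intro H. induction t; simpl; congruence. Qed.

Lemma extract (Q P : polygraph) (F : hom Q P) k t g : wt Q k t ->
  eqv P k (tmap F t) (tgen k g) ->
  exists h : gen Q k, topgens k t = [existT (gen Q) k h] /\ F k h = g.
Proof.
  intros w E. pose proof (topgens_eqv _ _ _ _ E) as T.
  rewrite topgens_tmap in T. simpl in T. rewrite Nat.eqb_refl in T.
  destruct (topgens k t) as [|[j h] [|y r]] eqn:Et; simpl in T; try discriminate.
  injection T as Tj T. subst j.
  apply inj_pair2_eq_dec in T; [|exact Nat.eq_dec].
  exists h; auto.
Qed.

Lemma part1 (P : polygraph) (k : nat) (g : gen P k) :
  principalP {| ep := P; ek := k; eg := g |} <->
  principalC (U {| ep := P; ek := k; eg := g |}).
Proof.
  split.
  - intros HP Y F HM Hmono. destruct Y as [Q n t w].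
    unfold eltC_mor in HM; simpl in HM. destruct HM as [Hn He]. subst n.
    destruct (extract Q P F k t g w He) as (h & Et & Fh).
    destruct (HP {| ep := Q; ek := k; eg := h |} F) as [_ [G [HG [GF FG]]]].
    + unfold eltP_mor; simpl. rewrite Fh. reflexivity.
    + exact Hmono.
    + unfold eltP_mor in HG; simpl in HG. apply inj_pair2_eq_dec in HG; [|exact Nat.eq_dec].
      split; [split; auto|]. exists G. split; [|split; auto].
      split; [reflexivity|]. simpl.
      assert (E : eqv Q k (tmap G (tmap F t)) (tmap G (tgen k g))) by (apply tmap_eqv; auto).
      rewrite tmap_comp_id in E by auto. simpl in E. rewrite HG in *. apply eqv_sym; exact E.
  - intros HC Y F HM Hmono. destruct Y as [Q j h].
    unfold eltP_mor in HM; simpl in HM.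
    assert (j = k) by exact (f_equal (@projT1 _ _) HM). subst j.
    pose proof HM as HM'.
    apply inj_pair2_eq_dec in HM; [|exact Nat.eq_dec].
    destruct (HC (U {| ep := Q; ek := k; eg := h |}) F) as [_ [G [_ [GF FG]]]].
    + split; [reflexivity|]. simpl. rewrite HM. apply eqv_refl, wt_gen.
    + exact Hmono.
    + split; [exact HM'|]. exists G. split; [|split; auto].
      unfold eltP_mor; simpl. rewrite <- HM, GF. reflexivity.
Qed.

Lemma principalC_transfer (Q : polygraph) n t t' (w : wt Q n t) (w' : wt Q n t') :
  principalC {| cp := Q; cn := n; ct := t; cwt := w |} -> eqv Q n t t' ->
  principalC {| cp := Q; cn := n; ct := t'; cwt := w' |}.
Proof.
  intros HC E Y F HM Hmono. destruct HM as [Hn He]. simpl in *.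
  assert (HM2 : eltC_mor Y {| cp := Q; cn := n; ct := t; cwt := w |} F).
  { split; auto. simpl. eapply eqv_trans; [exact He | apply eqv_sym; exact E]. }
  destruct (HC Y F HM2 Hmono) as [_ [G [[Hn' He'] [A B]]]].
  split; [split; auto|]. exists G. split; [|split; auto].
  split; auto. simpl in *. eapply eqv_trans; [|exact He'].
  apply tmap_eqv. rewrite <- Hn'. apply eqv_sym; exact E.
Qed.

Theorem proposition6p2 (P : polygraph) (k : nat) (g : gen P k) :
  (principalP {| ep := P; ek := k; eg := g |} <->
   principalC (U {| ep := P; ek := k; eg := g |})) /\
  (plex {| ep := P; ek := k; eg := g |} <->
   polyplex (U {| ep := P; ek := k; eg := g |})).
Proof.
  split; [apply part1|]. split.
  - intros [HP HPr]. split; [apply part1; auto|].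
    intros Y F HCY HM. destruct Y as [Q n t w].
    pose proof HM as HM0.
    unfold eltC_mor in HM; simpl in HM. destruct HM as [Hn He]. subst n.
    destruct (extract Q P F k t g w He) as (h & Et & Fh).
    assert (Eth : eqv Q k t (tgen k h)).
    { destruct (norm Q k t w h Et) as [E|L]; auto. exfalso.
      apply (lexgt_irrefl k (fun m => cnt Q m k t)).
      eapply lexgt_ext; [| | exact L]; intros m Hm; auto.
      rewrite <- (cnt_tmap Q P F k t m w ltac:(lia)).
      rewrite <- (cnt_tmap Q P F k (tgen k h) m (wt_gen _ _ _) ltac:(lia)).
      simpl tmap. rewrite Fh. apply cnt_eqv; [apply eqv_sym; exact He | lia]. }
    assert (HCh : principalC (U {| ep := Q; ek := k; eg := h |}))
      by (eapply principalC_transfer; eauto).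
    apply part1 in HCh.
    destruct (HPr {| ep := Q; ek := k; eg := h |} F HCh) as [_ [G [HG [GF FG]]]].
    + unfold eltP_mor; simpl. rewrite Fh. reflexivity.
    + unfold eltP_mor in HG; simpl in HG. apply inj_pair2_eq_dec in HG; [|exact Nat.eq_dec].
      split; [exact HM0|]. exists G. split; [|split; auto].
      split; [reflexivity|]. simpl. rewrite HG. apply eqv_sym; exact Eth.
  - intros [HC HCr]. split; [apply part1; auto|].
    intros Y F HPY HM. destruct Y as [Q j h].
    unfold eltP_mor in HM; simpl in HM.
    assert (j = k) by exact (f_equal (@projT1 _ _) HM). subst j.
    pose proof HM as HM'.
    apply inj_pair2_eq_dec in HM; [|exact Nat.eq_dec].
    apply part1 in HPY.
    destruct (HCr (U {| ep := Q; ek := k; eg := h |}) F HPY) as [_ [G [_ [GF FG]]]].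
    + split; [reflexivity|]. simpl. rewrite HM. apply eqv_refl, wt_gen.
    + split; [exact HM'|]. exists G. split; [|split; auto].
      unfold eltP_mor; simpl. rewrite <- HM, GF. reflexivity.
Qed.
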